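(* Let $(I,H)$ be a finite graph without edge loops with an admissible automorphism $a$ and an $a$-stable orientation $\Omega$ without oriented cycles, let $\mathbf n$ be a common multiple of all orbit sizes $d_i$ ($i\in I$) and $d_h$ ($h\in H$), and let $(\widetilde I,\widetilde H,\widetilde\Omega)$ with automorphism $\widetilde a$ be the split-quotient quiver of $(I,H,\Omega,a,\mathbf n)$. Then the Cartan matrix associated to $(\widetilde I,\widetilde H,\widetilde a)$ (with rows and columns indexed by the representatives $(i,1)$, $i\in\widehat I$) is the transpose of the Cartan matrix associated to $(I,H,a)$: $c_{(i,1)(j,1)}=c_{ji}$ for all $i,j\in\widehat I$.
   Context: Graph conventions: $I$ is the vertex set, $H$ the set of edges with an orientation (each edge appears twice), $s,t:H\to I$ source/target, $h\mapsto\bar h$ reversal; an orientation is $\Omega\subset H$ with $H=\Omega\sqcup\bar\Omega$. An admissible automorphism $a$ consists of permutations of $I$ and $H$ with $s(a(h))=a(s(h))$, $t(a(h))=a(t(h))$, $\overline{a(h)}=a(\bar h)$, such that no two adjacent vertices lie in the same $\langle a\rangle$-orbit; we assume $a(\Omega)=\Omega$. $d_i$ (resp. $d_h$) is the size of the $\langle a\rangle$-orbit of $i$ (resp. $h$); $e_i=\mathbf n/d_i$, $e_h=\mathbf n/d_h$. Split-quotient quiver: let $\widehat I$ be a set of representatives of $\langle a\rangle$-orbits in $I$, $\widehat H$ the set of $\langle a\rangle$-orbits in $H$, $\widehat\Omega$ those in $\Omega$; for $\widehat h=\langle a\rangle h$ let $s(\widehat h)$, $t(\widehat h)$ be the representatives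 of the orbits of $s(h),t(h)$, $e_{\widehat h}=e_h$, $\overline{\widehat h}=\langle a\rangle\bar h$. Put $\widetilde I=\{(i,\zeta):i\in\widehat I,\ \zeta\in\mu_{e_i}\}$ ($\mu_e$ the complex $e$-th roots of unity), $\widetilde H=\{(\widehat h,\zeta,\zeta'):\widehat h\in\widehat H,\zeta\in\mu_{e_{s(\widehat h)}},\zeta'\in\mu_{e_{t(\widehat h)}},\ \zeta^{e_{s(\widehat h)}/e_{\widehat h}}=\zeta'^{\,e_{t(\widehat h)}/e_{\widehat h}}\}$, $s(\widehat h,\zeta,\zeta')=(s(\widehat h),\zeta)$, $t(\widehat h,\zeta,\zeta')=(t(\widehat h),\zeta')$, $\overline{(\widehat h,\zeta,\zeta')}=(\overline{\widehat h},\zeta',\zeta)$, $\widetilde\Omega=\{(\widehat h,\zeta,\zeta'):\widehat h\in\widehat\Omega\}$. Fixing a primitive $\mathbf n$-th root of unity $\eta$, $\widetilde a(i,\zeta)=(i,\zeta\eta^{d_i})$, $\widetilde a(\widehat h,\zeta,\zeta')=(\widehat h,\zeta\eta^{d_{s(\widehat h)}},\zeta'\eta^{d_{t(\widehat h)}})$; this is an admissible automorphism and $\{(i,1):i\in\widehat I\}$ is a set of orbit representatives in $\widetilde I$. Cartan matrix of $(I,H,a)$: indexed by $\widehat I$, $c_{ii}=2$ and for $i\ne j$, $-c_{ij}=d_i^{-1}\,|\{h\in H: s(h)\in\langle a\rangle i,\ t(h)\in\langle a\rangle j\}|$; similarly for $(\widetilde I,\widetilde H,\widetilde a)$ using orbit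 sizes of $\widetilde a$. *)

(* Defs.v *)
From HB Require Import structures.
From mathcomp Require Import all_boot all_order all_algebra all_fingroup all_field.
Set Implicit Arguments. Unset Strict Implicit. Unset Printing Implicit Defensive.
Import Order.TTheory GRing.Theory Num.Theory.

Definition cartan (V E : finType) (src tgt : E -> V) (aV : V -> V) (i j : V)
  : rat :=
  if i == j then 2%:R%R
  else (- ((#|[set h | fconnect aV i (src h) & fconnect aV j (tgt h)]|)%:R
          / (fingraph.order aV i)%:R))%R.

Section Graph.
Variables (I H : finType) (s t : H -> I) (bar : H -> H).

Definition is_graph : Prop :=
  [/\ involutive bar, (forall h, bar h != h) & (forall h, s (bar h) = t h)].

Definition no_loops : Prop := forall h, s h != t h.

Variables (aI : {perm I}) (aH : {perm H}).

Definition admissible : Prop :=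
  [/\ (forall h, s (aH h) = aI (s h)), (forall h, t (aH h) = aI (t h)),
      (forall h, bar (aH h) = aH (bar h)) &
      (forall h, ~~ fconnect aI (s h) (t h))].

Definition orientation (O : {set H}) : Prop :=
  forall h, (h \in O) != (bar h \in O).

Definition a_stable (O : {set H}) : Prop := forall h, (aH h \in O) = (h \in O).

Definition oriented_rel (O : {set H}) : rel I :=
  fun x y => [exists h, [&& h \in O, s h == x & t h == y]].

Definition no_oriented_cycles (O : {set H}) : Prop :=
  forall h, h \in O -> ~~ connect (oriented_rel O) (t h) (s h).

Definition common_multiple (n : nat) : Prop :=
  [/\ 0 < n, (forall i, fingraph.order aI i %| n) & (forall h, fingraph.order aH h %| n)]%N.

End Graph.

(* rep : T -> T picks a representative of each <f>-orbit; the set of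
   representatives is the image of rep *)
Definition orbit_repr (T : finType) (f : T -> T) (rep : T -> T) : Prop :=
  (forall x, fconnect f x (rep x)) /\
  (forall x y, fconnect f x y -> rep x = rep y).

Section SplitQuotient.
Variables (I H : finType) (s t : H -> I).
Variables (aI : {perm I}) (aH : {perm H}).
Variables (rep : I -> I) (hrep : H -> H) (n : nat) (eta : algC).

Definition dI (i : I) : nat := fingraph.order aI i.
Definition dH (h : H) : nat := fingraph.order aH h.
Definition eI (i : I) : nat := (n %/ dI i)%N.
Definition eH (h : H) : nat := (n %/ dH h)%N.

(* hat I = set of representatives of <a>-orbits in I;
   hat H = <a>-orbits of H, each given by its representative *)
Definition hatI : {set I} := [set rep i | i in I].
Definition hatH : {set H} := [set hrep h | h in H].

(* the complex n-th roots of unity eta^k (eta a primitive n-th root) *)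
Definition mun : finType := seq_sub [seq (eta ^+ k)%R | k <- iota 0 n].

Definition tI_pred (p : I * mun) : bool :=
  (p.1 \in hatI) && ((ssval p.2) ^+ (eI p.1) == 1)%R.
Definition tI : finType := {p : I * mun | tI_pred p}.

Definition tH_pred (q : H * mun * mun) : bool :=
  let h := q.1.1 in
  let es := eI (rep (s h)) in
  let et := eI (rep (t h)) in
  [&& h \in hatH, ((ssval q.1.2) ^+ es == 1)%R, ((ssval q.2) ^+ et == 1)%R &
      ((ssval q.1.2) ^+ (es %/ eH h) == (ssval q.2) ^+ (et %/ eH h))%R].
Definition tH : finType := {q : H * mun * mun | tH_pred q}.

Lemma tsrc_subproof (x : tH) : tI_pred (rep (s (val x).1.1), (val x).1.2).
Proof.
case: x => [[[h z] z']] /= /and4P [_ hz _ _].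
by rewrite /tI_pred /= hz andbT; apply/imsetP; exists (s h).
Qed.

Lemma ttgt_subproof (x : tH) : tI_pred (rep (t (val x).1.1), (val x).2).
Proof.
case: x => [[[h z] z']] /= /and4P [_ _ hz' _].
by rewrite /tI_pred /= hz' andbT; apply/imsetP; exists (t h).
Qed.

Definition tsrc (x : tH) : tI := Sub _ (tsrc_subproof x).
Definition ttgt (x : tH) : tI := Sub _ (ttgt_subproof x).

(* tilde a (i, zeta) = (i, zeta * eta^(d_i)).  (insubd only supplies a
   fallback value for the never-occurring case that the product is not
   a valid vertex.) *)
Definition ta (x : tI) : tI :=
  let i := (val x).1 in
  let z := (val x).2 in
  insubd x (i, insubd z (ssval z * eta ^+ dI i)%R : mun).

End SplitQuotient.

(* Main.v *)
Require Import Defs.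
From HB Require Import structures.
From mathcomp Require Import all_boot all_order all_algebra all_fingroup all_field.
Import Order.TTheory GRing.Theory Num.Theory.
Set Implicit Arguments. Unset Strict Implicit. Unset Printing Implicit Defensive.

Lemma card_transfer (A B : finType) (f : A -> B) (P : {pred A}) (Q : {pred B}) :
  {in P &, injective f} -> (forall a, a \in P -> f a \in Q) ->
  (forall b, b \in Q -> exists2 a, a \in P & b = f a) -> #|Q| = #|P|.
Proof.
move=> inj PQ QP; rewrite -(card_in_imset inj); apply: eq_card => b.
apply/idP/imsetP => [/QP [a aP ->]|[a aP ->]]; first by exists a.
exact: PQ.
Qed.

Lemma count_mod q m r : r < q ->
  count (fun k => k %% q == r) (iota 0 (m * q)) = m.
Proof.
move=> rq; elim: m => [|m IH]; first by rewrite mul0n.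
rewrite mulSn addnC iotaD count_cat IH add0n.
have -> : iota (m * q) q = map (addn (m * q)) (iota 0 q).
  by rewrite -iotaDl addn0.
rewrite count_map.
rewrite (@eq_in_count _ _ (pred1 r)) => [|k]; last first.
  by rewrite mem_iota /= => kq; rewrite modnMDl modn_small.
have := count_uniq_mem r (iota_uniq 0 q); rewrite mem_iota rq /= => ->.
by rewrite addn1.
Qed.

Section Mun.
Variables (n : nat) (eta : algC).
Hypothesis prim : (n.-primitive_root eta)%R.

Lemma L_uniq : uniq [seq (eta ^+ k)%R | k <- iota 0 n].
Proof.
rewrite map_inj_in_uniq ?iota_uniq // => a b; rewrite !mem_iota /= => an bn /eqP.
by rewrite (eq_prim_root_expr prim) !modn_small // => /eqP.
Qed.

Lemma mun_card (Q : pred algC) :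
  #|[pred z : mun n eta | Q (ssval z)]| = count (fun k => Q (eta ^+ k)%R) (iota 0 n).
Proof.
rewrite cardE /enum_mem size_filter.
rewrite -enumT.
have pe : perm_eq (enum (mun n eta)) (seq_sub_enum [seq (eta ^+ k)%R | k <- iota 0 n]).
  apply: uniq_perm; first exact: enum_uniq.
    exact: undup_uniq.
  by move=> x; rewrite mem_enum mem_seq_sub_enum.
rewrite ((seq.permP pe) (mem _)).
have := count_map val Q (seq_sub_enum [seq (eta ^+ k)%R | k <- iota 0 n]).
rewrite val_seq_sub_enum ?L_uniq // count_map => <-.
by apply: eq_count.
Qed.

Lemma n_gt0 : 0 < n. Proof. exact: prim_order_gt0 prim. Qed.

Lemma root_count c b : c %| n -> c %| b ->
  #|[pred z : mun n eta | (ssval z ^+ c == eta ^+ b)%R]| = c.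
Proof.
move=> cn /dvdnP [a ->]; rewrite (mun_card (fun w => w ^+ c == eta ^+ (a * c)))%R.
have c0 : 0 < c by case: c cn => // /dvdnP [?]; rewrite muln0 => n0; move: n_gt0; rewrite n0.
set q := n %/ c.
have nqc : n = c * q by rewrite mulnC divnK.
have q0 : 0 < q by move: n_gt0; rewrite nqc muln_gt0 => /andP[].
rewrite (@eq_count _ _ (fun k => k %% q == a %% q)) => [|k /=].
  by rewrite nqc count_mod // ltn_pmod.
rewrite -exprM (eq_prim_root_expr prim) {1 2}nqc [c * q]mulnC -!muln_modl.
by rewrite eqn_pmul2r.
Qed.
End Mun.

Lemma order_con (T : finType) (f : {perm T}) x y :
  fconnect f x y -> fingraph.order f x = fingraph.order f y.
Proof.
move=> fxy; rewrite /fingraph.order; apply: eq_card; apply: same_connect => //.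
by move=> a b; apply: fconnect_sym; apply: perm_inj.
Qed.

Lemma order_dvd (T : finType) (f : {perm T}) x m :
  iter m f x = x -> fingraph.order f x %| m.
Proof.
set o := fingraph.order f x.
have io q : iter (q * o) f x = x.
  elim: q => [|q IH] //; rewrite mulSn iterD IH /o.
  exact: (iter_order (@perm_inj _ f)).
rewrite {1}(divn_eq m o) addnC iterD io => ir.
have := findex_iter (ltn_pmod m (fingraph.order_gt0 f x)); rewrite ir findex0.
by rewrite /dvdn => <-.
Qed.

Lemma iter_morph (A B : Type) (g : A -> B) (f1 : A -> A) (f2 : B -> B) :
  (forall a, g (f1 a) = f2 (g a)) -> forall k a, g (iter k f1 a) = iter k f2 (g a).
Proof. by move=> gm; elim => // k IH a; rewrite !iterS gm IH. Qed.

Lemma sum_ind (T : finType) (P : pred T) : \sum_(x : T) (P x : nat) = #|P|.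
Proof.
rewrite -sum1_card [RHS]big_mkcond; apply: eq_bigr => x _.
by rewrite unfold_in; case: (P x).
Qed.

Lemma card3 (A B C : finType) (F : pred (A * B * C)) :
  #|F| = \sum_(a : A) \sum_(b : B) \sum_(c : C) (F ((a, b), c) : nat).
Proof.
rewrite -sum_ind pair_bigA /= pair_bigA /=.
by apply: eq_bigr => -[[a b] c].
Qed.

Section Main.
Variables (I H : finType) (s t : H -> I) (bar : H -> H).
Variables (aI : {perm I}) (aH : {perm H}) (rep : I -> I) (hrep : H -> H).
Variables (n : nat) (eta : algC).
Hypothesis prim : (n.-primitive_root eta)%R.
Hypothesis cmI : forall i, fingraph.order aI i %| n.
Hypothesis cmH : forall h, fingraph.order aH h %| n.
Hypothesis sa : forall h, s (aH h) = aI (s h).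
Hypothesis tat : forall h, t (aH h) = aI (t h).
Hypothesis barK : involutive bar.
Hypothesis bst : forall h, s (bar h) = t h.
Hypothesis orep : orbit_repr aI rep.
Hypothesis ohrep : orbit_repr aH hrep.

Local Notation tI := (@tI I aI rep n eta).
Local Notation ta := (@ta I aI rep n eta).
Local Notation L := [seq (eta ^+ k)%R | k <- iota 0 n].

Lemma inL (w : algC) : w \in L -> exists2 k, k < n & w = (eta ^+ k)%R.
Proof. by case/mapP => k; rewrite mem_iota => /andP [_ kn] ->; exists k. Qed.

Lemma inL_mul (z : mun n eta) k : (ssval z * eta ^+ k)%R \in L.
Proof.
have [k0 _ ->] := inL (ssvalP z).
rewrite -exprD -(prim_expr_mod prim); apply: map_f.
by rewrite mem_iota /= ltn_pmod // (prim_order_gt0 prim).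
Qed.

Lemma ta_val (x : tI) :
  (val (ta x)).1 = (val x).1 /\
  ssval (val (ta x)).2 = (ssval (val x).2 * eta ^+ dI aI (val x).1)%R.
Proof.
rewrite /Defs.ta.
set z' := insubd (val x).2 _.
have z'v : ssval z' = (ssval (val x).2 * eta ^+ dI aI (val x).1)%R.
  by rewrite /z' insubdK //; apply: inL_mul.
have P : @tI_pred I aI rep n eta ((val x).1, z').
  have /andP [hi hz] := valP x.
  rewrite /tI_pred /= hi /= z'v exprMn (eqP hz) mul1r -exprM /eI.
  by rewrite mulnC divnK ?cmI // (prim_expr_order prim).
by rewrite (insubdK _ P).
Qed.

Lemma ta_iter (x : tI) m : (val (iter m ta x)).1 = (val x).1 /\
  ssval (val (iter m ta x)).2 = (ssval (val x).2 * eta ^+ (dI aI (val x).1 * m))%R.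
Proof.
elim: m => [|m [IH1 IH2]]; first by rewrite muln0 expr0 mulr1.
have [T1 T2] := ta_val (iter m ta x).
by rewrite iterS T1 IH1 T2 IH1 IH2 -mulrA -exprD mulnS addnC.
Qed.

Lemma dI_n i : dI aI i * eI aI n i = n.
Proof. by rewrite mulnC divnK ?cmI. Qed.

Lemma eI_gt0 i : 0 < eI aI n i.
Proof. by rewrite /eI /dI divn_gt0 ?fingraph.order_gt0 // (dvdn_leq (prim_order_gt0 prim) (cmI i)). Qed.

Lemma fconnect_ta (x z : tI) : ssval (val x).2 = 1%R ->
  fconnect ta x z = ((val z).1 == (val x).1).
Proof.
move=> x1; apply/idP/idP => [fxz|].
  rewrite (@fconnect_invariant _ ta _ (fun z : tI => (val z).1) _ x z fxz) //.
  by move=> y; apply/eqP; exact: (ta_val y).1.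
case: z => [[i' w] Pw] /= /eqP ei.
have /andP [_ hw] := Pw; rewrite /= in hw.
have [k _ wk] := inL (ssvalP w).
have : n %| k * eI aI n i'.
  by rewrite (prim_order_dvd prim) exprM -wk.
rewrite -{1}(dI_n i') dvdn_pmul2r ?eI_gt0 // => /dvdnP [m km].
have [J1 J2] := ta_iter x m.
suff -> : exist _ (i', w) Pw = iter m ta x by apply: fconnect_iter.
apply: val_inj; rewrite /= [val (iter m ta x)]surjective_pairing J1 -ei; congr pair.
by apply: val_inj; rewrite /= J2 x1 mul1r wk km ei mulnC.
Qed.

Lemma order_ta (x : tI) : ssval (val x).2 = 1%R ->
  fingraph.order ta x = eI aI n (val x).1.
Proof.
move=> x1; rewrite /fingraph.order.
set i := (val x).1.
have hi : i \in hatI rep by have /andP [] := valP x.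
rewrite (@eq_card _ _ [pred z : tI | (val z).1 == i]); last first.
  by move=> z; rewrite !inE /= fconnect_ta.
have Pw w : (ssval w ^+ eI aI n i == eta ^+ 0)%R -> @tI_pred I aI rep n eta (i, w).
  by rewrite expr0 /tI_pred /= hi.
rewrite (@card_transfer _ _ (fun w => insubd x (i, w))
   [pred w : mun n eta | (ssval w ^+ eI aI n i == eta ^+ 0)%R]).
- by rewrite (root_count prim) ?dvdn0 //; apply/dvdnP; exists (dI aI i); rewrite dI_n.
- move=> w1 w2; rewrite !inE => P1 P2 /(congr1 val).
  by rewrite !(insubdK _ (Pw _ _)) // => -[].
- by move=> w; rewrite !inE => P1; rewrite (insubdK _ (Pw _ P1)).
- move=> z; rewrite inE => /eqP zi; exists (val z).2.
    by have /andP [_] := valP z; rewrite /= zi inE expr0.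
  apply: val_inj; rewrite (insubdK _ (Pw _ _)); last first.
    by have /andP [_] := valP z; rewrite /= zi expr0.
  by rewrite [val z]surjective_pairing zi.
Qed.

Lemma fsymI x y : fconnect aI x y = fconnect aI y x.
Proof. by apply: fconnect_sym; apply: perm_inj. Qed.
Lemma fsymH x y : fconnect aH x y = fconnect aH y x.
Proof. by apply: fconnect_sym; apply: perm_inj. Qed.

Lemma rep_fcon x y : (rep x == rep y) = fconnect aI x y.
Proof.
apply/eqP/idP => [e|]; last exact: orep.2.
apply: connect_trans (orep.1 x) _; rewrite e fsymI; exact: orep.1.
Qed.

Lemma rep_hat i : i \in hatI rep -> rep i = i.
Proof. by case/imsetP => k _ ->; apply/esym/orep.2/orep.1. Qed.

Lemma hrep_fcon x y : (hrep x == hrep y) = fconnect aH x y.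
Proof.
apply/eqP/idP => [e|]; last exact: ohrep.2.
apply: connect_trans (ohrep.1 x) _; rewrite e fsymH; exact: ohrep.1.
Qed.

Lemma hrep_hat h : h \in hatH hrep -> hrep h = h.
Proof. by case/imsetP => k _ ->; apply/esym/ohrep.2/ohrep.1. Qed.

Lemma s_con h h' : fconnect aH h h' -> fconnect aI (s h) (s h').
Proof. by move/iter_findex => <-; rewrite (iter_morph sa); apply: fconnect_iter. Qed.
Lemma t_con h h' : fconnect aH h h' -> fconnect aI (t h) (t h').
Proof. by move/iter_findex => <-; rewrite (iter_morph tat); apply: fconnect_iter. Qed.

Lemma dvd_s h : fingraph.order aI (s h) %| fingraph.order aH h.
Proof.
apply: order_dvd; rewrite -(iter_morph sa) (iter_order (@perm_inj _ aH)) //.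
Qed.
Lemma dvd_t h : fingraph.order aI (t h) %| fingraph.order aH h.
Proof.
apply: order_dvd; rewrite -(iter_morph tat) (iter_order (@perm_inj _ aH)) //.
Qed.

Lemma Qh h : h \in hatH hrep ->
  (\sum_(z : mun n eta) \sum_(z' : mun n eta)
     (@tH_pred I H s t aI aH rep hrep n eta ((h, z), z') : nat)) * dI aI (rep (t h))
  = eI aI n (rep (s h)) * dH aH h.
Proof.
move=> hh.
have n0 := prim_order_gt0 prim.
have Ei : dI aI (rep (s h)) = fingraph.order aI (s h).
  by rewrite /dI -(order_con (orep.1 (s h))).
have Ej : dI aI (rep (t h)) = fingraph.order aI (t h).
  by rewrite /dI -(order_con (orep.1 (t h))).
have [p dhp] := dvdnP (dvd_s h).
have [r dhr] := dvdnP (dvd_t h).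
have [m nm] := dvdnP (cmH h).
set di := fingraph.order aI (s h) in Ei dhp.
set dj := fingraph.order aI (t h) in Ej dhr.
set dh := fingraph.order aH h in dhp dhr nm.
have m0 : 0 < m by move: n0; rewrite nm muln_gt0 => /andP [].
have di0 : 0 < di by apply: fingraph.order_gt0.
have dj0 : 0 < dj by apply: fingraph.order_gt0.
have dh0 : 0 < dh by apply: fingraph.order_gt0.
have p0 : 0 < p by move: dh0; rewrite dhp muln_gt0 => /andP [].
have r0 : 0 < r by move: dh0; rewrite dhr muln_gt0 => /andP [].
have es : eI aI n (rep (s h)) = m * p by rewrite /eI Ei nm dhp mulnA mulnK.
have et : eI aI n (rep (t h)) = m * r by rewrite /eI Ej nm dhr mulnA mulnK.
have eh : eH aH n h = m by rewrite /eH /dH -/dh nm mulnK.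
rewrite /tH_pred /= hh es et eh !mulKn // /dH -/dh Ej.
have rn : r %| n by rewrite nm dhr dvdn_mull // dvdn_mulr.
have mpn : m * p %| n by rewrite nm dhp mulnA dvdn_mulr.
rewrite (eq_bigr (fun z : mun n eta => ((ssval z ^+ (m * p) == 1)%R : nat) * r)); last first.
  move=> z _; case: (boolP (ssval z ^+ (m * p) == 1)%R) => hz; last first.
    by rewrite big1 // => z' _; rewrite (negbTE hz).
  have [k _ wk] := inL (ssvalP z).
  have dk : di %| k.
    have : n %| k * (m * p) by rewrite (prim_order_dvd prim) exprM -wk.
    rewrite nm dhp (_ : m * (p * di) = di * (m * p)); last by rewrite mulnA mulnC.
    by rewrite dvdn_pmul2r ?muln_gt0 ?m0.
  have rk : r %| k * p.
    by rewrite (dvdn_trans (dvdn_mulr dj (dvdnn r))) // -dhr dhp mulnC dvdn_mul.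
  rewrite mul1n -[RHS](root_count prim rn rk) -sum_ind; apply: eq_bigr => z' _.
  rewrite wk -exprM; congr (nat_of_bool _); rewrite [RHS]/=.
  apply/idP/idP => [/and4P [_ _ _ /eqP <-] /= //|/eqP e].
  apply/and4P; split => //; last by rewrite e.
  by rewrite mulnC exprM e -exprM -mulnA [p * m]mulnC exprM -wk.
rewrite -(big_distrl r) /= sum_ind.
have := root_count prim mpn (dvdn0 (m * p)); rewrite expr0 => ->.
by rewrite -mulnA dhr mulnA.
Qed.

Lemma orbit_sum (c : pred H) :
  (forall h h', fconnect aH h h' -> c h = c h') ->
  #|c| = \sum_(h0 in hatH hrep) c h0 * dH aH h0.
Proof.
move=> ci; rewrite -sum_ind (partition_big hrep (mem (hatH hrep))); last first.
  by move=> h _; apply: imset_f.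
apply: eq_bigr => h0 h0h.
rewrite (eq_bigl (fconnect aH h0)) => [|h]; last first.
  by rewrite /= -{1}(hrep_hat h0h) hrep_fcon fsymH.
rewrite (eq_bigr (fun _ => (c h0 : nat))) => [|h /ci -> //].
by rewrite sum_nat_const mulnC.
Qed.

Lemma fcon_rep j x : j \in hatI rep -> fconnect aI j x = (rep x == j).
Proof. by move=> hj; rewrite -rep_fcon (rep_hat hj) eq_sym. Qed.

Local Notation tsrc := (@tsrc I H s t aI aH rep hrep n eta).
Local Notation ttgt := (@ttgt I H s t aI aH rep hrep n eta).
Local Notation tH := (@tH I H s t aI aH rep hrep n eta).

Lemma main_count (x y : tI) : ssval (val x).2 = 1%R -> ssval (val y).2 = 1%R ->
  cartan tsrc ttgt ta x y = cartan s t aI (val y).1 (val x).1.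
Proof.
move=> x1 y1.
have exy : (x == y) = ((val y).1 == (val x).1).
  apply/eqP/eqP => [-> //|e]; apply: val_inj.
  move: x y x1 y1 e => [[i1 z1] P1] [[i2 z2] P2] /= x1 y1 ->; congr pair.
  by apply: val_inj; exact: (etrans x1 (esym y1)).
rewrite /cartan exy; case: eqP => // ji.
set i := (val x).1 in ji *; set j := (val y).1 in ji *.
have hi : i \in hatI rep by have /andP [] := valP x.
have hj : j \in hatI rep by have /andP [] := valP y.
set c := fun h => (rep (s h) == i) && (rep (t h) == j).
have ci : forall h h', fconnect aH h h' -> c h = c h'.
  move=> h h' hh; rewrite /c.
  have /orep.2 -> := s_con hh.
  by have /orep.2 -> := t_con hh.
set Nt := #|_|; set N := #|_|.
have E1 : Nt = #|[pred q | @tH_pred I H s t aI aH rep hrep n eta q && c q.1.1]|.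
  rewrite /Nt; apply/esym; apply: (@card_transfer tH _ val) => //.
  - by move=> a b _ _; apply: val_inj.
  - move=> a; rewrite !inE !fconnect_ta // => /andP [/eqP e1 /eqP e2]; rewrite (valP a) /c /=.
    apply/andP; split; apply/eqP; [exact: e1 | exact: e2].
  - move=> q; rewrite !inE => /andP [Pq cq]; exists (exist _ q Pq) => //.
    by rewrite !inE !fconnect_ta //= -/i -/j; move: cq; rewrite /c /=.
have E2 : N = #|c|.
  rewrite /N; apply: (@card_transfer _ _ bar) => //.
  - by move=> a b _ _; apply: (can_inj barK).
  - move=> a; rewrite !inE /c !fcon_rep // unfold_in /=.
    have tb : t (bar a) = s a by rewrite -{2}(barK a) bst.
    by rewrite (bst a) tb andbC.
  - move=> b; rewrite !inE /c !fcon_rep // => cb; exists (bar b); last by rewrite barK.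
    rewrite unfold_in /=.
    have tb : t (bar b) = s b by rewrite -{2}(barK b) bst.
    by rewrite (bst b) tb andbC.
have E3 : Nt * dI aI j = eI aI n i * N.
  rewrite E1 E2 (orbit_sum ci) big_distrr card3 big_distrl /=.
  rewrite [RHS]big_mkcond; apply: eq_bigr => h _.
  case: (boolP (c h)) => chh; last first.
    rewrite big1 ?mul0n; first by case: ifP; rewrite ?muln0.
    by move=> z _; rewrite big1 // => z' _; rewrite andbF.
  have /andP [/eqP esi /eqP etj] := chh.
  under eq_bigr do under eq_bigr do rewrite andbT.
  case: (boolP (h \in hatH hrep)) => hh.
    by rewrite -etj (Qh hh) esi mul1n.
  rewrite big1 //= => z _; rewrite big1 // => z' _.
  by rewrite /tH_pred /= (negbTE hh).
rewrite order_ta //; congr (- _)%R; apply/eqP.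
rewrite eqr_div ?pnatr_eq0 -?lt0n ?eI_gt0 ?fingraph.order_gt0 //.
by rewrite -!natrM; apply/eqP; congr (_%:R)%R; rewrite -/(dI aI j) E3 mulnC.
Qed.
End Main.

Unset Implicit Arguments.
Set Strict Implicit.

Theorem lemma2p1 (I H : finType) (s t : H -> I) (bar : H -> H)
    (aI : {perm I}) (aH : {perm H}) (O : {set H})
    (rep : I -> I) (hrep : H -> H) (n : nat) (eta : algC) :
  is_graph s t bar -> no_loops s t ->
  admissible s t bar aI aH ->
  orientation bar O -> a_stable aH O -> no_oriented_cycles s t O ->
  common_multiple aI aH n ->
  (n.-primitive_root eta)%R ->
  orbit_repr aI rep -> orbit_repr aH hrep ->
  forall x y : @tI I aI rep n eta,
    ssval (val x).2 = 1%R -> ssval (val y).2 = 1%R ->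
    cartan (@tsrc I H s t aI aH rep hrep n eta) (@ttgt I H s t aI aH rep hrep n eta)
           (@ta I aI rep n eta) x y
    = cartan s t aI (val y).1 (val x).1.
Proof.
move=> [barK _ bst] _ [sa tat _ _] _ _ _ [_ cmI cmH] prim orep ohrep x y x1 y1.
exact: (@main_count I H s t bar aI aH rep hrep n eta prim cmI cmH sa tat barK bst orep ohrep x y x1 y1).
Qed.
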